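(* Let the setting described in the context hold, and assume conditions (A)(i)–(iii) and (P), with $L_F^2\eta_k<1-\eta_F$ for every $k\ge1$. Let $k\ge1$ be such that the iterate satisfies $x_k^\delta\in\mathcal{B}_\rho(x^\dagger)$, and write $e_k^\delta=x_k^\delta-x^\dagger$. Define \[ c_k^\delta=2\eta_k\lambda_k^\delta\max(1,L_G^2)\big(\tfrac32+2\eta_k\lambda_k^\delta L_G^2\big), \qquad d_k=\frac{(1+\eta_F)^2}{2(1-L_F^2\eta_k-\eta_F)}\eta_k . \] Then \[ \|e_{k+1}^\delta\|^2\le(1+nc_k^\delta)\|e_k^\delta\|^2+nc_k^\delta(C_{max}+\delta)^2+nd_k\delta^2, \] and \begin{align*} \mathbb{E}[\|e_{k+1}^\delta\|^2]\le{}&(1+c_k^\delta)\mathbb{E}[\|e_k^\delta\|^2]+c_k^\delta(C_{max}+\delta)^2+2(1+\eta_F)\eta_k\delta\,\mathbb{E}[\|F(x_k^\delta)-y^\delta\|^2]^{1/2}\\ &-2(1-L_F^2\eta_k-\eta_F)\eta_k\,\mathbb{E}[\|F(x_k^\delta)-y^\delta\|^2]\\ \le{}&(1+c_k^\delta)\mathbb{E}[\|e_k^\delta\|^2]+c_k^\delta(C_{max}+\delta)^2+d_k\delta^2 . \end{align*}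
   Context: Setting. $X,Y$ are real Hilbert spaces and $n\ge1$. $Y^n$ is the product Hilbert space with $\|(z_i)\|^2=\sum_i\|z_i\|^2$. For $i=1,\dots,n$, $F_i:\mathcal{D}(F_i)\subset X\to Y$ and $G_i:X\to Y$ are nonlinear, $F(x)=n^{-1/2}(F_1(x),\dots,F_n(x))$ and $G(x)=n^{-1/2}(G_1(x),\dots,G_n(x))$. Data. $y^\dagger=n^{-1/2}(y_1^\dagger,\dots,y_n^\dagger)$ are the exact data and $y^\delta=n^{-1/2}(y_1^\delta,\dots,y_n^\delta)$ the noisy data, with $\|y^\delta-y^\dagger\|\le\delta$. Reference solution. $x_1$ is a deterministic initial guess, and $x^\dagger$ is the solution of $F(x)=y^\dagger$ of minimal distance to $x_1$. Algorithm. $x_1^\delta=x_1$, and \[ x_{k+1}^\delta=x_k^\delta-\eta_k\big(F_{i_k}'(x_k^\delta)^*(F_{i_k}(x_k^\delta)-y^\delta_{i_k})+\lambda_k^\delta G_{i_k}'(x_k^\delta)^*(G_{i_k}(x_k^\delta)-y^\delta_{i_k})\big), \] with $i_k$ drawn uniformly and independently from $\{1,\dots,n\}$, $\eta_k>0$ and $\lambda_k^\delta>0$. $\mathbb{E}$ is expectation over the random indices. (A) There is a closed ball $\mathcal{B}_\rho(x^\dagger)\subset\bigcap_i\mathcal{D}(F_i)$, $\rho\ge\|x_1-x^\dagger\|$ sufficiently large, on which the following hold. (i) $F_i$ and $G_i$ have continuous Fréchet derivatives with $\max_i\sup\|F_i'\|\le L_F$ and $\max_i\sup\|G_i'\|\le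 L_G$. (ii) There is $\eta_F\in[0,1)$ with $\|F_i(x)-F_i(\tilde x)-F_i'(\tilde x)(x-\tilde x)\|\le\eta_F\|F_i(x)-F_i(\tilde x)\|$ for all $i$ and $x,\tilde x\in\mathcal{B}_\rho(x^\dagger)$. (iii) $C_{min}\le\|G(x^* )-y^\dagger\|\le C_{max}$ for every solution $x^*\in\mathcal{B}_\rho(x^\dagger)$ of $F(x)=y^\dagger$, with constants $0<C_{min}\le C_{max}$. (P) $L_F^2\eta_k<1$, $\sum_k\eta_k=\infty$, and $\sum_k\eta_k\lambda_k^\delta<\infty$. *)

(* Defs.v *)
From HB Require Import structures.
From mathcomp Require Import all_boot all_order all_algebra.
From mathcomp Require Import all_classical all_reals all_analysis.
Set Implicit Arguments. Unset Strict Implicit. Unset Printing Implicit Defensive.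
Import Order.TTheory GRing.Theory Num.Theory.
Import numFieldNormedType.Exports.
Local Open Scope classical_set_scope.
Local Open Scope ring_scope.

(* A real inner product on a normed space whose induced norm is the norm.
   Together with completeness (completeNormedModType) this is a real
   Hilbert space. *)
Definition is_inner_product (R : realType) (V : normedModType R)
    (ip : V -> V -> R) : Prop :=
  (forall u v, ip u v = ip v u) /\
  (forall (a : R) u v w, ip (a *: u + v) w = a * ip u w + ip v w) /\
  (forall u, ip u u = `|u| ^+ 2).

Definition cball (R : realType) (V : normedModType R) (c : V) (r : R) : set V :=
  [set x | `|x - c| <= r].

Definition C1_on (R : realType) (V W : normedModType R) (f : V -> W)
    (A : set V) : Prop :=
  (forall x, A x -> differentiable f x) /\
  (forall x, A x -> forall e : R, 0 < e -> exists2 d : R, 0 < d &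
     forall y, A y -> `|y - x| < d ->
       forall h, `|'d f y h - 'd f x h| <= e * `|h|).

(* Norm in Y^n of the vector n^{-1/2}(z_1,...,z_n):
   ||n^{-1/2} z|| = sqrt( n^{-1} sum_i ||z_i||^2 ). *)
Definition pnorm (R : realType) (Y : normedModType R) (n : nat)
    (z : 'I_n -> Y) : R :=
  Num.sqrt (n%:R^-1 * \sum_(i < n) `|z i| ^+ 2).

(* One step of the algorithm at (paper) iteration k with index i:
   x - eta_k (F_i'(x)^*(F_i(x)-y_i) + lam_k G_i'(x)^*(G_i(x)-y_i)).
   Fs i x, Gs i x stand for the adjoints F_i'(x)^*, G_i'(x)^*. *)
Definition step (R : realType) (X Y : normedModType R) (n : nat)
    (F G : 'I_n -> X -> Y) (Fs Gs : 'I_n -> X -> Y -> X) (yd : 'I_n -> Y)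
    (eta lam : nat -> R) (k : nat) (i : 'I_n) (x : X) : X :=
  x - eta k *: (Fs i x (F i x - yd i) + lam k *: Gs i x (G i x - yd i)).

(* run k x s: start from x at (paper) iteration k and apply the steps with
   the successive indices in s.  Hence for t = (i_1,...,i_m),
   run 1 x_1 t = x_{m+1}. *)
Fixpoint run (R : realType) (X Y : normedModType R) (n : nat)
    (F G : 'I_n -> X -> Y) (Fs Gs : 'I_n -> X -> Y -> X) (yd : 'I_n -> Y)
    (eta lam : nat -> R) (k : nat) (x : X) (s : seq 'I_n) : X :=
  match s with
  | [::] => x
  | i :: s' => run F G Fs Gs yd eta lam k.+1 (step F G Fs Gs yd eta lam k i x) s'
  end.

(* Expectation over m indices drawn uniformly and independently from
   {1,...,n}: the uniform average over all m-tuples. *)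
Definition Eunif (R : realType) (n m : nat) (f : m.-tuple 'I_n -> R) : R :=
  (n%:R ^+ m)^-1 * \sum_(t : m.-tuple 'I_n) f t.

(* Main.v *)
Require Import Defs.
From HB Require Import structures.
From mathcomp Require Import all_boot all_order all_algebra.
From mathcomp Require Import all_classical all_reals all_analysis.
From mathcomp Require Import lra ring.
Set Implicit Arguments. Unset Strict Implicit. Unset Printing Implicit Defensive.
Import Order.TTheory GRing.Theory Num.Theory.
Import numFieldNormedType.Exports.
Local Open Scope classical_set_scope.
Local Open Scope ring_scope.
Section IP.
Context (R : realType) (V : normedModType R) (ip : V -> V -> R).
Hypothesis hip : is_inner_product ip.

Lemma ip_sym u v : ip u v = ip v u. Proof. by case: hip => h _; apply: h. Qed.
Lemma ip_lin a u v w : ip (a *: u + v) w = a * ip u w + ip v w.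
Proof. by case: hip => _ [h1 h2]; auto. Qed.
Lemma ip_norm u : ip u u = `|u| ^+ 2. Proof. by case: hip => _ [h1 h2]; auto. Qed.
Lemma ip_addl u v w : ip (u + v) w = ip u w + ip v w.
Proof. by have := ip_lin 1 u v w; rewrite scale1r mul1r. Qed.
Lemma ip_scalel a u w : ip (a *: u) w = a * ip u w.
Proof.
have h0 : ip 0 w = 0.
  have := ip_lin 1 0 0 w; rewrite scaler0 addr0 mul1r => h; lra.
by have := ip_lin a u 0 w; rewrite addr0 h0 addr0.
Qed.
Lemma ip_oppl u w : ip (- u) w = - ip u w.
Proof. by rewrite -scaleN1r ip_scalel mulN1r. Qed.
Lemma ip_subl u v w : ip (u - v) w = ip u w - ip v w.
Proof. by rewrite ip_addl ip_oppl. Qed.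
Lemma ip_addr u v w : ip w (u + v) = ip w u + ip w v.
Proof. by rewrite ip_sym ip_addl !(ip_sym w). Qed.
Lemma ip_scaler a u w : ip w (a *: u) = a * ip w u.
Proof. by rewrite ip_sym ip_scalel ip_sym. Qed.
Lemma ip_oppr u w : ip w (- u) = - ip w u.
Proof. by rewrite ip_sym ip_oppl ip_sym. Qed.
Lemma ip_subr u v w : ip w (u - v) = ip w u - ip w v.
Proof. by rewrite ip_addr ip_oppr. Qed.
Lemma normD2 u v : `|u + v| ^+ 2 = `|u| ^+ 2 + 2 * ip u v + `|v| ^+ 2.
Proof. rewrite -!ip_norm ip_addl !ip_addr (ip_sym v u); lra. Qed.
Lemma normB2 u v : `|u - v| ^+ 2 = `|u| ^+ 2 - 2 * ip u v + `|v| ^+ 2.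
Proof. by rewrite normD2 ip_oppr normrN; lra. Qed.
Lemma ip_le u v : ip u v <= `|u| * `|v|.
Proof.
have h := normD2 u v.
have t : `|u + v| <= `|u| + `|v| := ler_normD u v.
have : `|u + v| ^+ 2 <= (`|u| + `|v|) ^+ 2.
  by rewrite ler_sqr ?nnegrE ?addr_ge0.
nra.
Qed.
Lemma ip_ge u v : - (`|u| * `|v|) <= ip u v.
Proof. have := ip_le u (- v); rewrite ip_oppr normrN; lra. Qed.
End IP.

Lemma sq_le_of (R : realType) (a b : R) : 0 <= a -> a ^+ 2 <= b * a -> a ^+ 2 <= b ^+ 2.
Proof. move=> a0 h; nra. Qed.

Lemma lip (R : realType) (X Y : normedModType R) (ipY : Y -> Y -> R)
  (hipY : is_inner_product ipY) (G : X -> Y) (c : X) (rho L : R) :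
  (forall z, cball c rho z -> differentiable G z) ->
  (forall z, cball c rho z -> forall h, `|'d G z h| <= L * `|h|) ->
  forall x, cball c rho x -> `|G x - G c| ^+ 2 <= L ^+ 2 * `|x - c| ^+ 2.
Proof.
move=> dG bG x xb.
set e := x - c; set w := G x - G c.
pose l : Y -> R := fun y => ipY y w.
have lin_l : linear l by move=> a u v; rewrite /l ip_lin.
pose lM := GRing.isLinear.Build _ _ _ _ _ lin_l.
pose lL : {linear Y -> R} := HB.pack l lM.
have lcont : continuous lL.
  apply/linear_bounded_continuous/bounded_funP => r.
  exists (r * `|w|) => y yr /=.
  rewrite /l ler_norml; apply/andP; split.
    have := ip_ge hipY y w; have := normr_ge0 w; nra.
  have := ip_le hipY y w; have := normr_ge0 w; nra.
pose g : R -> X := fun t => t *: e + c.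
have gb (t : R) : 0 <= t <= 1 -> cball c rho (g t).
  move=> /andP [t0 t1]; rewrite /cball /= /g addrK normrZ ger0_norm //.
  have : `|e| <= rho by [].
  have := normr_ge0 e; nra.
have geq : g = (fun t : R => t *: e) + cst c by apply/funext => t.
have did (t : R) : differentiable (@id R) t by [].
have dg (t : R) : differentiable g t.
  rewrite geq; apply: differentiableD; last exact: differentiable_cst.
  exact: differentiableZl.
have dg1 (t : R) : 'd g t 1 = e.
  rewrite geq diffD; last exact: differentiable_cst.
    rewrite diffZl //= diff_cst /= addr0.
    by rewrite -deriveE // derive_id scale1r.
  exact: differentiableZl.
pose phi := lL \o (G \o g).
have dphi (t : R) : 0 <= t <= 1 -> differentiable phi t.
  move=> tb; apply: differentiable_comp; last exact: linear_differentiable.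
  by apply: differentiable_comp => //; apply: dG; apply: gb.
have Dphi (t : R) : 0 <= t <= 1 -> 'D_1 phi t = ipY ('d G (g t) e) w.
  move=> tb; rewrite deriveE; last exact: dphi.
  rewrite diff_comp; last exact: linear_differentiable.
    rewrite /= (diff_lin _ lcont) /= diff_comp //=; last by apply: dG; apply: gb.
    idtac.
    by rewrite dg1.
  by apply: differentiable_comp => //; apply: dG; apply: gb.
have [t0 t0b ht0] : exists2 t0, t0 \in `[0, 1]%R & phi 1 - phi 0 = 'D_1 phi t0 * (1 - 0).
  apply: MVT_segment => //.
    move=> t; rewrite in_itv /= => /andP [ta tb]; apply: derivableP.
    by apply: diff_derivable; apply: dphi; rewrite !ltW.
  apply: derivable_within_continuous => t; rewrite in_itv /= => tb.
  exact/diff_derivable/dphi.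
move: ht0; rewrite subr0 mulr1 Dphi; last by move: t0b; rewrite in_itv.
rewrite /phi /= /l /g scale1r scale0r add0r subrK -ip_subl // ip_norm // => hw.
rewrite -exprMn; apply: sq_le_of => //; rewrite hw.
apply: le_trans (ip_le hipY _ _) _.
apply: ler_wpM2r => //; apply: bG; apply: gb; by move: t0b; rewrite in_itv.
Qed.
Lemma normD2_le (R : realType) (V : normedModType R) (ip : V -> V -> R)
  (hip : is_inner_product ip) (a b : V) :
  `|a + b| ^+ 2 <= 2 * `|a| ^+ 2 + 2 * `|b| ^+ 2.
Proof.
rewrite (normD2 hip); have := ip_le hip a b.
have := sqr_ge0 (`|a| - `|b|); nra.
Qed.

Lemma adj_bound (R : realType) (X Y : normedModType R) (ipX : X -> X -> R)
  (ipY : Y -> Y -> R) (hipX : is_inner_product ipX) (hipY : is_inner_product ipY)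
  (A : X -> Y) (As : Y -> X) (L : R) :
  (forall h, `|A h| <= L * `|h|) -> (forall h v, ipY (A h) v = ipX h (As v)) ->
  forall r, `|As r| ^+ 2 <= L ^+ 2 * `|r| ^+ 2.
Proof.
move=> bA adj r; rewrite -exprMn; apply: sq_le_of => //.
rewrite -(ip_norm hipX) -adj.
apply: le_trans (ip_le hipY _ _) _.
rewrite mulrAC; apply: ler_wpM2r => //.
Qed.
Lemma zm (V : zmodType) (a p q y : V) : a = p - q + a + (q - y) + (y - p).
Proof.
rewrite [p - q + a]addrC -!addrA -[LHS]addr0; congr (a + _).
by rewrite !addKr subrr.
Qed.

Lemma zm3 (V : zmodType) (p q g y : V) : p - y = (p - q) + ((q - g) - (y - g)).
Proof. by rewrite opprB (addrA (q - g)) subrK addrA subrK. Qed.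

Lemma ler_sqr_ok (R : realType) (a b : R) : 0 <= a -> a <= b -> a ^+ 2 <= b ^+ 2.
Proof. move=> a0 ab; nra. Qed.

Definition ckf (R : realType) (et la LG : R) :=
  2 * et * la * Num.max 1 (LG ^+ 2) * (3 / 2 + 2 * et * la * LG ^+ 2).

Lemma one_step (R : realType) (X Y : normedModType R) (ipX : X -> X -> R)
  (ipY : Y -> Y -> R) (hipX : is_inner_product ipX) (hipY : is_inner_product ipY)
  (Fi Gi : X -> Y) (Fsi Gsi : X -> Y -> X) (x xdag : X) (y yg : Y)
  (LF LG etaF et la : R) :
  (forall h, `|'d Fi x h| <= LF * `|h|) ->
  (forall h, `|'d Gi x h| <= LG * `|h|) ->
  (forall h v, ipY ('d Fi x h) v = ipX h (Fsi x v)) ->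
  (forall h v, ipY ('d Gi x h) v = ipX h (Gsi x v)) ->
  `|Fi xdag - Fi x - 'd Fi x (xdag - x)| <= etaF * `|Fi xdag - Fi x| ->
  `|Gi x - Gi xdag| ^+ 2 <= LG ^+ 2 * `|x - xdag| ^+ 2 ->
  Fi xdag = yg -> 0 <= etaF -> 0 < et -> 0 < la ->
  `|x - et *: (Fsi x (Fi x - y) + la *: Gsi x (Gi x - y)) - xdag| ^+ 2
  <= (1 + ckf et la LG) * `|x - xdag| ^+ 2 + ckf et la LG * (`|Gi xdag - yg| + `|y - yg|) ^+ 2
     - 2 * (1 - LF ^+ 2 * et - etaF) * et * `|Fi x - y| ^+ 2
     + 2 * (1 + etaF) * et * `|y - yg| * `|Fi x - y|.
Proof.
move=> bF bG adjF adjG tcc lipG Fxd eF0 et0 la0.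
set r := Fi x - y; set s := Gi x - y; set u := Fsi x r; set v := Gsi x s.
set e := x - xdag; set nu := y - yg; set gg := Gi xdag - yg.
have -> : x - et *: (u + la *: v) - xdag = e - et *: (u + la *: v).
  by rewrite /e addrAC.
rewrite (normB2 hipX) (ip_scaler hipX) (ip_addr hipX) (ip_scaler hipX).
rewrite -adjF -adjG normrZ exprMn gtr0_norm //.
set IF := ipY _ r; set IG := ipY _ s.
set Q := `|u + la *: v| ^+ 2.
have h2 : Q <= 2 * `|u| ^+ 2 + 2 * la ^+ 2 * `|v| ^+ 2.
  rewrite /Q; apply: le_trans (normD2_le hipX _ _) _.
  rewrite normrZ exprMn gtr0_norm //; lra.
have h3 : `|u| ^+ 2 <= LF ^+ 2 * `|r| ^+ 2 := adj_bound hipX hipY bF adjF r.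
have h4 : `|v| ^+ 2 <= LG ^+ 2 * `|s| ^+ 2 := adj_bound hipX hipY bG adjG s.
have h5 : (1 - etaF) * `|r| ^+ 2 - (1 + etaF) * `|nu| * `|r| <= IF.
  set z := Fi xdag - Fi x - 'd Fi x (xdag - x).
  have dz : 'd Fi x e = z + r + nu.
    have hx : xdag - x = - e by rewrite /e opprB.
    by rewrite /z hx /r /nu -Fxd linearN /= opprK -zm.
  rewrite /IF dz (ip_addl hipY (z + r) nu r) (ip_addl hipY z r r) (ip_norm hipY r).
  have hz : `|z| <= etaF * (`|r| + `|nu|).
    apply: le_trans tcc _; apply: ler_wpM2l => //.
    have -> : Fi xdag - Fi x = - (r + nu) by rewrite /r /nu -Fxd opprD !opprB [RHS]addrC [RHS]addrA subrK.
    by rewrite normrN ler_normD.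
  have := ip_ge hipY z r; have := ip_ge hipY nu r.
  have := normr_ge0 r; have := normr_ge0 nu; nra.
have h6 : - (2 * IG) <= LG ^+ 2 * `|e| ^+ 2 + `|s| ^+ 2.
  have := ip_ge hipY ('d Gi x e) s.
  have := sqr_ge0 (`|'d Gi x e| - `|s|).
  have : `|'d Gi x e| ^+ 2 <= LG ^+ 2 * `|e| ^+ 2.
    by rewrite -exprMn; apply: ler_sqr_ok.
  rewrite /IG; nra.
set E := `|e|; set Rr := `|r|; set N := `|nu|; set a := `|gg| + N.
set S := `|s|; set U := `|u|; set Vv := `|v|.
have h7 : S ^+ 2 <= 2 * LG ^+ 2 * E ^+ 2 + 2 * a ^+ 2.
  have sd : s = (Gi x - Gi xdag) + (gg - nu) by rewrite /s /gg /nu (zm3 _ (Gi xdag) yg).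
  have hS : S <= `|Gi x - Gi xdag| + a.
    rewrite /S sd; apply: le_trans (ler_normD _ _) _; rewrite lerD2l /a.
    by apply: le_trans (ler_normB _ _) _.
  have S0 : 0 <= S by exact: normr_ge0.
  have : S ^+ 2 <= (`|Gi x - Gi xdag| + a) ^+ 2 by apply: ler_sqr_ok.
  have := sqr_ge0 (`|Gi x - Gi xdag| - a).
  move: lipG; rewrite -/E => lipG; nra.
have E0 : 0 <= E by exact: normr_ge0. have a0 : 0 <= a by rewrite /a addr_ge0 // normr_ge0.
have U0 : 0 <= U by exact: normr_ge0.
have V0 : 0 <= Vv by exact: normr_ge0.
have p1 : et ^+ 2 * Q <= et ^+ 2 * (2 * U ^+ 2 + 2 * la ^+ 2 * Vv ^+ 2).
  by apply: ler_wpM2l => //; apply: sqr_ge0.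
have p2 : et ^+ 2 * U ^+ 2 <= et ^+ 2 * (LF ^+ 2 * Rr ^+ 2).
  by apply: ler_wpM2l => //; apply: sqr_ge0.
have p3 : (et * la) ^+ 2 * Vv ^+ 2 <= (et * la) ^+ 2 * (LG ^+ 2 * S ^+ 2).
  by apply: ler_wpM2l => //; apply: sqr_ge0.
have p4 : et * ((1 - etaF) * Rr ^+ 2 - (1 + etaF) * N * Rr) <= et * IF.
  by apply: ler_wpM2l => //; apply: ltW.
have p5 : et * la * - (2 * IG) <= et * la * (LG ^+ 2 * E ^+ 2 + S ^+ 2).
  by apply: ler_wpM2l => //; apply: mulr_ge0; apply: ltW.
have eL0 : 0 <= et * la * LG ^+ 2 by apply: mulr_ge0; [apply: mulr_ge0; apply: ltW|apply: sqr_ge0].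
have p6 : (et * la + 2 * (et * la) * (et * la * LG ^+ 2)) * S ^+ 2 <=
          (et * la + 2 * (et * la) * (et * la * LG ^+ 2)) * (2 * LG ^+ 2 * E ^+ 2 + 2 * a ^+ 2).
  apply: ler_wpM2l => //; apply: addr_ge0; first by apply: mulr_ge0; apply: ltW.
  by apply: mulr_ge0 => //; apply: mulr_ge0 => //; apply: mulr_ge0 => //; apply: ltW.
have etla0 : 0 < et * la by apply: mulr_gt0.
have hM1 : 1 <= Num.max 1 (LG ^+ 2) by rewrite le_max lexx.
have hM2 : LG ^+ 2 <= Num.max 1 (LG ^+ 2) by rewrite le_max lexx orbT.
have p7 : et * la * LG ^+ 2 * (3 + 4 * (et * la * LG ^+ 2)) <= ckf et la LG.
  rewrite /ckf.
  have : (et * la) * LG ^+ 2 * (3 + 4 * (et * la * LG ^+ 2)) <= (et * la) * Num.max 1 (LG ^+ 2) * (3 + 4 * (et * la * LG ^+ 2)).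
    apply: ler_wpM2r; first by nra.
    by apply: ler_wpM2l => //; apply: ltW.
  lra.
have p8 : 2 * (et * la) * (1 + 2 * (et * la * LG ^+ 2)) <= ckf et la LG.
  rewrite /ckf.
  have : (et * la) * 1 * (3 + 4 * (et * la * LG ^+ 2)) <= (et * la) * Num.max 1 (LG ^+ 2) * (3 + 4 * (et * la * LG ^+ 2)).
    apply: ler_wpM2r; first by nra.
    by apply: ler_wpM2l => //; apply: ltW.
  nra.
have p9 : (et * la * LG ^+ 2 * (3 + 4 * (et * la * LG ^+ 2))) * E ^+ 2 <= ckf et la LG * E ^+ 2.
  by apply: ler_wpM2r => //; apply: sqr_ge0.
have p10 : (2 * (et * la) * (1 + 2 * (et * la * LG ^+ 2))) * a ^+ 2 <= ckf et la LG * a ^+ 2.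
  by apply: ler_wpM2r => //; apply: sqr_ge0.
rewrite -/E -/Rr -/N -/a.
nra.
Qed.
Lemma sum_rcons (R : realType) (n m : nat) (g : seq 'I_n -> R) :
  \sum_(u : m.+1.-tuple 'I_n) g u = \sum_(t : m.-tuple 'I_n) \sum_(i < n) g (rcons t i).
Proof.
pose h (p : m.-tuple 'I_n * 'I_n) : m.+1.-tuple 'I_n := [tuple of rcons p.1 p.2].
pose hi (u : m.+1.-tuple 'I_n) : m.-tuple 'I_n * 'I_n :=
  ([tuple of belast (thead u) (behead_tuple u)], last (thead u) (behead u)).
have ue (u : m.+1.-tuple 'I_n) : thead u :: behead u = u :> seq 'I_n.
  by rewrite [in RHS](tuple_eta u).
have hK : cancel h hi.
  move=> [t i]; rewrite /h /hi /=.
  have e : thead [tuple of rcons t i] :: behead [tuple of rcons t i] = rcons t i.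
    exact: ue.
  have := lastI (thead [tuple of rcons t i]) (behead [tuple of rcons t i]).
  rewrite e => /rcons_inj [e1 e2].
  by congr (_, _) => //; apply: val_inj => /=.
have hiK : cancel hi h.
  by move=> u; apply: val_inj; rewrite /h /hi /= -lastI ue.
rewrite (reindex h) /=; last by exists hi => // ? _.
by rewrite pair_big /=.
Qed.

Lemma run_rcons (R : realType) (X Y : normedModType R) (n : nat)
    (F G : 'I_n -> X -> Y) (Fs Gs : 'I_n -> X -> Y -> X) (yd : 'I_n -> Y)
    (eta lam : nat -> R) (s : seq 'I_n) (k : nat) (x : X) (i : 'I_n) :
  run F G Fs Gs yd eta lam k x (rcons s i) =
  step F G Fs Gs yd eta lam (k + size s) i (run F G Fs Gs yd eta lam k x s).
Proof.
elim: s k x => [|j s IH] k x /=; first by rewrite addn0.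
by rewrite IH addSnnS.
Qed.
Lemma finCS (R : realType) (I : finType) (f g : I -> R) :
  (\sum_i f i * g i) ^+ 2 <= (\sum_i f i ^+ 2) * (\sum_i g i ^+ 2).
Proof.
set A := \sum_i f i ^+ 2; set B := \sum_i f i * g i; set C := \sum_i g i ^+ 2.
have C0 : 0 <= C by apply: sumr_ge0 => i _; apply: sqr_ge0.
have A0 : 0 <= A by apply: sumr_ge0 => i _; apply: sqr_ge0.
have key : 0 <= \sum_i (C * f i - B * g i) ^+ 2 by apply: sumr_ge0 => i _; apply: sqr_ge0.
have ex : \sum_i (C * f i - B * g i) ^+ 2 = C ^+ 2 * A - 2 * C * B * B + B ^+ 2 * C.
  rewrite (eq_bigr (fun i => C ^+ 2 * f i ^+ 2 - (2 * C * B) * (f i * g i) + B ^+ 2 * g i ^+ 2)); last by move=> i _; ring.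
  rewrite big_split /= sumrB -!mulr_sumr /A /B /C; ring.
rewrite ex in key.
have [Cp|Cz] := ltrP 0 C.
  have : 0 <= C * A - B ^+ 2.
    have : 0 <= C * (C * A - B ^+ 2) by nra.
    by rewrite pmulr_rge0.
  nra.
have C00 : C = 0 by apply/le_anti/andP.
have gz : forall i, g i = 0.
  move=> i; apply/eqP; rewrite -sqrf_eq0; apply/eqP.
  move/eqP: C00; rewrite /C psumr_eq0; last by move=> j _; apply: sqr_ge0.
  by move/allP => /(_ i (mem_index_enum i)) /eqP.
have -> : B = 0 by rewrite /B big1 // => i _; rewrite gz mulr0.
rewrite expr0n /=; nra.
Qed.

Lemma quad_bound (R : realType) (A B N r : R) :
  0 < A -> B * N * r - A * r ^+ 2 <= B ^+ 2 / (4 * A) * N ^+ 2.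
Proof.
move=> A0; set D := B ^+ 2 / (4 * A) * N ^+ 2.
have k : D * (4 * A) = B ^+ 2 * N ^+ 2 by rewrite /D; field; lra.
have := sqr_ge0 (B * N - 2 * A * r); nra.
Qed.

Lemma sq_le_mono (R : realType) (x y : R) : 0 <= y -> x ^+ 2 <= y ^+ 2 -> x <= y.
Proof. move=> y0 h; nra. Qed.

Lemma pnorm_sq (R : realType) (Y : normedModType R) (n : nat) (z : 'I_n -> Y) :
  pnorm z ^+ 2 = n%:R^-1 * \sum_(i < n) `|z i| ^+ 2.
Proof.
rewrite /pnorm sqr_sqrtr //; apply: mulr_ge0; first by rewrite invr_ge0.
by apply: sumr_ge0 => i _; apply: sqr_ge0.
Qed.

Lemma pnorm_le (R : realType) (Y : normedModType R) (n : nat) (z : 'I_n -> Y) (c : R) :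
  (0 < n)%N -> pnorm z <= c -> \sum_(i < n) `|z i| ^+ 2 <= n%:R * c ^+ 2.
Proof.
move=> n0 h.
have p0 : 0 <= pnorm z by apply: sqrtr_ge0.
have := ler_sqr_ok p0 h; rewrite pnorm_sq => h2.
have nR : 0 < (n%:R : R) by rewrite ltr0n.
have -> : \sum_(i < n) `|z i| ^+ 2 = n%:R * (n%:R^-1 * \sum_(i < n) `|z i| ^+ 2).
  by rewrite mulrA mulfV ?mul1r // lt0r_neq0.
by apply: ler_wpM2l => //; apply: ltW.
Qed.

Lemma term_le_sum (R : realType) (n : nat) (f : 'I_n -> R) (i : 'I_n) :
  (forall j, 0 <= f j) -> f i <= \sum_(j < n) f j.
Proof.
move=> f0; rewrite (bigD1 i) //=; rewrite lerDl.
by apply: sumr_ge0 => j _.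
Qed.

Lemma sum_const_test (R : realType) (T : finType) (c : R) :
  \sum_(t : T) c = #|T|%:R * c.
Proof. by rewrite sumr_const mulr_natl. Qed.

Unset Implicit Arguments.

Theorem proposition3p1
  (R : realType) (X Y : completeNormedModType R)
  (ipX : X -> X -> R) (ipY : Y -> Y -> R)
  (n : nat)
  (D : 'I_n -> set X) (F G : 'I_n -> X -> Y) (Fs Gs : 'I_n -> X -> Y -> X)
  (ydag yd : 'I_n -> Y) (delta : R)
  (x1 xdag : X) (rho : R)
  (LF LG etaF Cmin Cmax : R) (eta lam : nat -> R) (m : nat) :
  is_inner_product ipX -> is_inner_product ipY ->
  (0 < n)%N ->
  (* noise level ||y^delta - y^dagger|| <= delta *)
  pnorm (fun i => yd i - ydag i) <= delta ->
  (* x^dagger: solution of F(x) = y^dagger of minimal distance to x_1 *)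
  (forall i, D i xdag) -> (forall i, F i xdag = ydag i) ->
  (forall x, (forall i, D i x) -> (forall i, F i x = ydag i) ->
     `|xdag - x1| <= `|x - x1|) ->
  (* (A): the ball and the assumptions on it *)
  `|x1 - xdag| <= rho ->
  (forall i, cball xdag rho `<=` D i) ->
  (* (A)(i) *)
  (forall i, C1_on (F i) (cball xdag rho)) ->
  (forall i, C1_on (G i) (cball xdag rho)) ->
  (forall i x, cball xdag rho x -> forall h, `|'d (F i) x h| <= LF * `|h|) ->
  (forall i x, cball xdag rho x -> forall h, `|'d (G i) x h| <= LG * `|h|) ->
  (* Fs, Gs are the adjoints of the derivatives on the ball *)
  (forall i x, cball xdag rho x -> forall h v,
     ipY ('d (F i) x h) v = ipX h (Fs i x v)) ->
  (forall i x, cball xdag rho x -> forall h v,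
     ipY ('d (G i) x h) v = ipX h (Gs i x v)) ->
  (* (A)(ii) tangential cone condition *)
  0 <= etaF -> etaF < 1 ->
  (forall i x xt, cball xdag rho x -> cball xdag rho xt ->
     `|F i x - F i xt - 'd (F i) xt (x - xt)| <= etaF * `|F i x - F i xt|) ->
  (* (A)(iii) *)
  0 < Cmin -> Cmin <= Cmax ->
  (forall xs, cball xdag rho xs -> (forall i, F i xs = ydag i) ->
     Cmin <= pnorm (fun i => G i xs - ydag i) <= Cmax) ->
  (* (P), and L_F^2 eta_k < 1 - eta_F, for k >= 1 *)
  (forall k, (1 <= k)%N -> 0 < eta k /\ 0 < lam k) ->
  (forall k, (1 <= k)%N -> LF ^+ 2 * eta k < 1) ->
  (fun N => \sum_(1 <= k < N) eta k) @ \oo --> +oo ->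
  cvg ((fun N => \sum_(1 <= k < N) (eta k * lam k)) @ \oo) ->
  (forall k, (1 <= k)%N -> LF ^+ 2 * eta k < 1 - etaF) ->
  (* k = m+1 >= 1, and x_k lies in the ball (for every realization) *)
  (forall t : m.-tuple 'I_n, cball xdag rho (run F G Fs Gs yd eta lam 1 x1 t)) ->
  let k := m.+1 in
  let xk (t : seq 'I_n) := run F G Fs Gs yd eta lam 1 x1 t in
  let ck := 2 * eta k * lam k * Num.max 1 (LG ^+ 2)
            * (3 / 2 + 2 * eta k * lam k * LG ^+ 2) in
  let dk := (1 + etaF) ^+ 2 / (2 * (1 - LF ^+ 2 * eta k - etaF)) * eta k in
  let Eek := Eunif (fun t : m.-tuple 'I_n => `|xk t - xdag| ^+ 2) in
  let Eek1 := Eunif (fun t : m.+1.-tuple 'I_n => `|xk t - xdag| ^+ 2) in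
  let Eres := Eunif (fun t : m.-tuple 'I_n =>
                 pnorm (fun i => F i (xk t) - yd i) ^+ 2) in
  (forall (t : m.-tuple 'I_n) (i : 'I_n),
     `|xk (rcons t i) - xdag| ^+ 2
       <= (1 + n%:R * ck) * `|xk t - xdag| ^+ 2
          + n%:R * ck * (Cmax + delta) ^+ 2 + n%:R * dk * delta ^+ 2)
  /\
  Eek1 <= (1 + ck) * Eek + ck * (Cmax + delta) ^+ 2
          + 2 * (1 + etaF) * eta k * delta * Num.sqrt Eres
          - 2 * (1 - LF ^+ 2 * eta k - etaF) * eta k * Eres
  /\
  (1 + ck) * Eek + ck * (Cmax + delta) ^+ 2
          + 2 * (1 + etaF) * eta k * delta * Num.sqrt Eres
          - 2 * (1 - LF ^+ 2 * eta k - etaF) * eta k * Eres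
    <= (1 + ck) * Eek + ck * (Cmax + delta) ^+ 2 + dk * delta ^+ 2.
Proof.
move=> hipX hipY n0 hdel Dxd Fxd minx x1b ballD C1F C1G bF bG adjF adjG eF0 eF1
  tcc Cmin0 CminCmax Cbd etalam LFeta1 _ _ LFeta xkb k xk ck dk Eek Eek1 Eres.
have [et0 la0] : 0 < eta k /\ 0 < lam k by apply: etalam.
have Qp : 0 < 1 - LF ^+ 2 * eta k - etaF by have := LFeta k erefl; lra.
have rho0 : 0 <= rho := le_trans (normr_ge0 _) x1b.
have xdb : cball xdag rho xdag by rewrite /cball /= subrr normr0.
have nR : 0 < (n%:R : R) by rewrite ltr0n.
have n1 : 1 <= (n%:R : R) by rewrite ler1n.
pose nu i := yd i - ydag i. pose gg i := G i xdag - ydag i.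
pose a i := `|gg i| + `|nu i|.
have delta0 : 0 <= delta := le_trans (sqrtr_ge0 _) hdel.
have Cmax0 : 0 <= Cmax by lra.
have hnu : \sum_i `|nu i| ^+ 2 <= n%:R * delta ^+ 2 by apply: pnorm_le.
have hgg : \sum_i `|gg i| ^+ 2 <= n%:R * Cmax ^+ 2.
  apply: pnorm_le => //; have /andP [_ ->] // := Cbd xdag xdb Fxd.
have hnui i : `|nu i| ^+ 2 <= n%:R * delta ^+ 2.
  apply: le_trans hnu; rewrite (bigD1 i) //= lerDl; apply: sumr_ge0 => j _; exact: sqr_ge0.
have hggi i : `|gg i| ^+ 2 <= n%:R * Cmax ^+ 2.
  apply: le_trans hgg; rewrite (bigD1 i) //= lerDl; apply: sumr_ge0 => j _; exact: sqr_ge0.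
have hai i : a i ^+ 2 <= n%:R * (Cmax + delta) ^+ 2.
  have g0 : 0 <= `|gg i| := normr_ge0 _. have N0 : 0 <= `|nu i| := normr_ge0 _.
  have : `|gg i| * `|nu i| <= n%:R * Cmax * delta.
    apply: sq_le_mono; first by apply: mulr_ge0 => //; apply: mulr_ge0 => //; apply: ltW.
    rewrite exprMn [in X in _ <= X]exprMn [in X in _ <= X]exprMn.
    have := hnui i; have := hggi i; have := sqr_ge0 `|nu i|; nra.
  have := hnui i; have := hggi i; rewrite /a; nra.
have hsa : \sum_i a i ^+ 2 <= n%:R * (Cmax + delta) ^+ 2.
  have ex : \sum_i a i ^+ 2 = \sum_i `|gg i| ^+ 2 + 2 * \sum_i (`|gg i| * `|nu i|)
                             + \sum_i `|nu i| ^+ 2.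
    rewrite mulr_sumr -!big_split /=; apply: eq_bigr => i _; rewrite /a; ring.
  have cs := finCS (fun i => `|gg i|) (fun i => `|nu i|).
  have hx : \sum_i (`|gg i| * `|nu i|) <= n%:R * Cmax * delta.
    apply: sq_le_mono; first by apply: mulr_ge0 => //; apply: mulr_ge0 => //; apply: ltW.
    apply: le_trans cs _.
    have s0 : 0 <= \sum_i `|nu i| ^+ 2 by apply: sumr_ge0 => i _; apply: sqr_ge0.
    have s1 : 0 <= \sum_i `|gg i| ^+ 2 by apply: sumr_ge0 => i _; apply: sqr_ge0.
    have := ler_pM s1 s0 hgg hnu.
    move=> h; apply: le_trans h _; rewrite !exprMn; lra.
  rewrite ex; lra.
have M1 : 1 <= Num.max 1 (LG ^+ 2) by rewrite le_max lexx.
have ck0 : 0 <= ck.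
  rewrite /ck; apply: mulr_ge0; first by apply: mulr_ge0; [apply: mulr_ge0; [apply: mulr_ge0 => //; apply: ltW|apply: ltW]|lra].
  have : 0 <= eta k * lam k * LG ^+ 2.
    by apply: mulr_ge0; [apply: mulr_ge0; apply: ltW|apply: sqr_ge0].
  lra.
set A := 2 * (1 - LF ^+ 2 * eta k - etaF) * eta k.
set B := 2 * (1 + etaF) * eta k.
have A0 : 0 < A by rewrite /A; apply: mulr_gt0 => //; lra.
have dkE : dk = B ^+ 2 / (4 * A).
  rewrite /dk /A /B; field; apply/andP; split; apply: lt0r_neq0 => //; lra.
have dk0 : 0 <= dk by rewrite dkE; apply: mulr_ge0; [apply: sqr_ge0|rewrite invr_ge0; lra].
have stepb (t : m.-tuple 'I_n) (i : 'I_n) :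
  `|xk (rcons t i) - xdag| ^+ 2 <= (1 + ck) * `|xk t - xdag| ^+ 2 + ck * a i ^+ 2
     - A * `|F i (xk t) - yd i| ^+ 2 + B * `|nu i| * `|F i (xk t) - yd i|.
  rewrite /xk run_rcons size_tuple add1n -/(xk t) /step.
  have xb := xkb t.
  apply: (one_step hipX hipY (yd i) (bF i _ xb) (bG i _ xb) (adjF i _ xb) (adjG i _ xb)
           (tcc i _ _ xdb xb) _ (Fxd i) eF0 et0 la0).
  apply: (lip hipY (G := G i) (c := xdag) (rho := rho)) => //.
    by move=> z zb; case: (C1G i) => h _; apply: h.
  exact: bG.
have quad (N r : R) : B * N * r - A * r ^+ 2 <= dk * N ^+ 2.
  by rewrite dkE; apply: quad_bound.
have Eres0 : 0 <= Eres.
  rewrite /Eres /Eunif; apply: mulr_ge0; first by rewrite invr_ge0 exprn_ge0 // ltW.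
  by apply: sumr_ge0 => t _; apply: sqr_ge0.
split.
  move=> t i; apply: le_trans (stepb t i) _.
  set E := `|xk t - xdag|; set Rr := `|F i (xk t) - yd i|.
  have q := quad `|nu i| Rr.
  have h1 : 0 <= (n%:R - 1) * ck * E ^+ 2.
    by apply: mulr_ge0; [apply: mulr_ge0 => //; lra|apply: sqr_ge0].
  have h2 : ck * a i ^+ 2 <= ck * (n%:R * (Cmax + delta) ^+ 2) by apply: ler_wpM2l.
  have h3 : dk * `|nu i| ^+ 2 <= dk * (n%:R * delta ^+ 2) by apply: ler_wpM2l.
  lra.
split; last first.
  have q := quad delta (Num.sqrt Eres).
  rewrite sqr_sqrtr // in q.
  lra.
set nm := (n%:R : R) ^+ m.
set P := (n%:R : R) ^+ m.+1.
have PE : P = n%:R * nm by rewrite /P exprS.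
have nm0 : 0 < nm by rewrite /nm exprn_gt0.
have P0 : 0 < P by rewrite PE mulr_gt0.
have sc (c : R) : \sum_(i < n) c = n%:R * c by rewrite sumr_const card_ord mulr_natl.
have sct (c : R) : \sum_(t : m.-tuple 'I_n) c = nm * c.
  by rewrite sumr_const card_tuple card_ord -mulr_natl natrX.
pose E t := `|xk t - xdag|.
pose Rr t i := `|F i (xk t) - yd i|.
have e1 : Eek1 = P^-1 * \sum_(t : m.-tuple 'I_n) \sum_(i < n) E (rcons t i) ^+ 2.
  by rewrite /Eek1 /Eunif (sum_rcons m (fun s => `|xk s - xdag| ^+ 2)).
have b1 : \sum_(t : m.-tuple 'I_n) \sum_(i < n) E (rcons t i) ^+ 2 <=
   \sum_(t : m.-tuple 'I_n) \sum_(i < n) ((1 + ck) * E t ^+ 2 + ck * a i ^+ 2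
     - A * Rr t i ^+ 2 + B * `|nu i| * Rr t i).
  by apply: ler_sum => t _; apply: ler_sum => i _; apply: stepb.
have spl : \sum_(t : m.-tuple 'I_n) \sum_(i < n) ((1 + ck) * E t ^+ 2 + ck * a i ^+ 2
     - A * Rr t i ^+ 2 + B * `|nu i| * Rr t i) =
   \sum_(t : m.-tuple 'I_n) \sum_(i < n) ((1 + ck) * E t ^+ 2)
   + \sum_(t : m.-tuple 'I_n) \sum_(i < n) (ck * a i ^+ 2)
   - A * \sum_(t : m.-tuple 'I_n) \sum_(i < n) (Rr t i ^+ 2)
   + B * \sum_(t : m.-tuple 'I_n) \sum_(i < n) (`|nu i| * Rr t i).
  rewrite !mulr_sumr -big_split -sumrB -big_split /=; apply: eq_bigr => t _.
  rewrite !mulr_sumr -big_split -sumrB -big_split /=; apply: eq_bigr => i _.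
  ring.
have T1 : \sum_(t : m.-tuple 'I_n) \sum_(i < n) ((1 + ck) * E t ^+ 2) = n%:R * (1 + ck) * (nm * Eek).
  have -> : nm * Eek = \sum_(t : m.-tuple 'I_n) E t ^+ 2.
    by rewrite /Eek /Eunif mulrA mulfV ?mul1r // lt0r_neq0.
  by rewrite mulr_sumr; apply: eq_bigr => t _; rewrite sc mulrA.
have T2 : \sum_(t : m.-tuple 'I_n) \sum_(i < n) (ck * a i ^+ 2) = nm * (ck * \sum_i a i ^+ 2).
  by rewrite sct -mulr_sumr.
have T3 : \sum_(t : m.-tuple 'I_n) \sum_(i < n) (Rr t i ^+ 2) = P * Eres.
  rewrite /Eres /Eunif -/nm PE -mulrA (mulrA nm) mulfV ?lt0r_neq0 // mul1r mulr_sumr.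
  apply: eq_bigr => t _; rewrite pnorm_sq mulrA mulfV ?lt0r_neq0 // mul1r.
  done.
have T4 : \sum_(t : m.-tuple 'I_n) \sum_(i < n) (`|nu i| * Rr t i) <= P * (delta * Num.sqrt Eres).
  apply: sq_le_mono.
    by apply: mulr_ge0; [apply: ltW|apply: mulr_ge0 => //; apply: sqrtr_ge0].
  rewrite pair_big /=.
  apply: le_trans (finCS (fun p : m.-tuple 'I_n * 'I_n => `|nu p.2|) (fun p => Rr p.1 p.2)) _.
  have q1 : \sum_(p : m.-tuple 'I_n * 'I_n) `|nu p.2| ^+ 2 =
     \sum_(t : m.-tuple 'I_n) \sum_(i < n) `|nu i| ^+ 2 by rewrite pair_big.
  have q2 : \sum_(p : m.-tuple 'I_n * 'I_n) Rr p.1 p.2 ^+ 2 =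
     \sum_(t : m.-tuple 'I_n) \sum_(i < n) Rr t i ^+ 2 by rewrite pair_big.
  rewrite q1 q2 T3.
  rewrite sct.
  have s0 : 0 <= \sum_i `|nu i| ^+ 2 by apply: sumr_ge0 => i _; apply: sqr_ge0.
  have : nm * \sum_i `|nu i| ^+ 2 <= nm * (n%:R * delta ^+ 2) by apply: ler_wpM2l => //; apply: ltW.
  have : 0 <= P * Eres by apply: mulr_ge0 => //; apply: ltW.
  rewrite !exprMn sqr_sqrtr // PE.
  nra.
rewrite e1.
have key : \sum_(t : m.-tuple 'I_n) \sum_(i < n) E (rcons t i) ^+ 2 <=
  P * ((1 + ck) * Eek + ck * (Cmax + delta) ^+ 2
          + 2 * (1 + etaF) * eta k * delta * Num.sqrt Eres
          - 2 * (1 - LF ^+ 2 * eta k - etaF) * eta k * Eres).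
  apply: le_trans b1 _; rewrite spl T1 T2 T3.
  have h2 : nm * (ck * \sum_i a i ^+ 2) <= nm * (ck * (n%:R * (Cmax + delta) ^+ 2)).
    by apply: ler_wpM2l; [apply: ltW|apply: ler_wpM2l].
  have h4 : B * \sum_(t : m.-tuple 'I_n) \sum_(i < n) (`|nu i| * Rr t i) <= B * (P * (delta * Num.sqrt Eres)).
    by apply: ler_wpM2l => //; rewrite /B; apply: mulr_ge0; [lra|apply: ltW].
  rewrite PE in h4 *; rewrite /A /B in h4 *; nra.
rewrite -(ler_pM2l P0) mulrA mulfV ?lt0r_neq0 // mul1r.
exact: key.
Qed.
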